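(* Let $E$ be a second countable Stone space with at least seven points, and let $\gamma$ be a non-peripheral cut of $E$. Then $\gamma$ is outermost if and only if for every pants decomposition $\Gamma$ of $E$ containing $\gamma$, the vertex $\gamma$ has valence at most two in the adjacency graph $A(\Gamma)$.
   Context: A Stone space is a compact, Hausdorff, totally disconnected space. A cut of $E$ is an unordered partition of $E$ into two disjoint clopen sets $U,V$, written $U\sqcup V$; it is non-peripheral if each of $U,V$ contains at least two points. A non-peripheral cut is outermost if one of its two sides contains exactly two points. Two cuts $U\sqcup V$, $U'\sqcup V'$ cross if all four sets $U\cap U'$, $U\cap V'$, $V\cap U'$, $V\cap V'$ are nonempty; otherwise they are compatible. A pants decomposition of $E$ is a countable collection $\Gamma$ of non-peripheral cuts such that: (1) any two cuts in $\Gamma$ are compatible; (2) every non-peripheral cut $\gamma\notin\Gamma$ crosses some cut of $\Gamma$; (3) every non-peripheral cut $\gamma\notin\Gamma$ crosses only finitely many cuts of $\Gamma$. Two cuts $\gamma_i,\gamma_j\in\Gamma$ are adjacent in $\Gamma$ if there is a non-peripheral cut crossing $\gamma_i$ and $\gamma_j$ and no other cut of $\Gamma$; the adjacency graph $A(\Gamma)$ has vertex set $\Gamma$ and edges between adjacent cuts. *)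

(* Defs.v *)
From mathcomp Require Import all_boot.
From mathcomp Require Import all_classical all_reals all_analysis.
Set Implicit Arguments. Unset Strict Implicit. Unset Printing Implicit Defensive.
Local Open Scope classical_set_scope.

Section Cuts.
Variable E : topologicalType.

Definition stone_space : Prop :=
  [/\ compact [set: E], hausdorff_space E & totally_disconnected [set: E]].

(* A cut is an unordered partition {U, V} of E into two disjoint (nonempty)
   clopen sets; we represent it as the set of its two sides [set U; ~` U]. *)
Definition cut (C : set (set E)) : Prop :=
  exists U : set E, [/\ clopen U, U !=set0, ~` U !=set0 & C = [set U; ~` U]].

Definition has_two_points (U : set E) : Prop :=
  exists x y, [/\ U x, U y & x <> y].

Definition has_exactly_two_points (U : set E) : Prop :=
  exists x y, x <> y /\ U = [set x; y].

Definition nonperipheral (C : set (set E)) : Prop :=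
  cut C /\ forall U, C U -> has_two_points U.

Definition outermost (C : set (set E)) : Prop :=
  nonperipheral C /\ exists U, C U /\ has_exactly_two_points U.

Definition cross (C D : set (set E)) : Prop :=
  forall U V, C U -> D V -> U `&` V !=set0.

Definition compatible (C D : set (set E)) : Prop := ~ cross C D.

Definition pants_decomposition (G : set (set (set E))) : Prop :=
  [/\ countable G,
      (forall C, G C -> nonperipheral C),
      (forall C D, G C -> G D -> compatible C D),
      (forall g, nonperipheral g -> ~ G g -> exists2 C, G C & cross g C)
    & (forall g, nonperipheral g -> ~ G g ->
         finite_set [set C | G C /\ cross g C])].

Definition adjacent (G : set (set (set E))) (Ci Cj : set (set E)) : Prop :=
  [/\ G Ci, G Cj, Ci <> Cj &
      exists g, [/\ nonperipheral g, cross g Ci, cross g Cj &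
                   forall C, G C -> cross g C -> C = Ci \/ C = Cj]].

Definition valence_le2 (G : set (set (set E))) (C : set (set E)) : Prop :=
  forall a b c, adjacent G C a -> adjacent G C b -> adjacent G C c ->
    [\/ a = b, a = c | b = c].

End Cuts.

(* Main.v *)
Require Import Defs.
From HB Require Import structures.
From mathcomp Require Import all_boot.
From mathcomp Require Import all_classical all_reals all_analysis.
From mathcomp Require Import zify.
From Stdlib Require Import Lia.
Set Implicit Arguments. Unset Strict Implicit. Unset Printing Implicit Defensive.
Local Open Scope classical_set_scope.

Definition pE (T : topologicalType) (x : T) : Type := T.
HB.instance Definition _ (T : topologicalType) (x : T) := Topological.copy (pE x) T.
HB.instance Definition _ (T : topologicalType) (x : T) := isPointed.Build (pE x) x.

Lemma clopen_enum (T : topologicalType) (x : T) :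
  compact [set: T] -> @second_countable T ->
  exists e : nat -> set T, (forall n, clopen (e n)) /\
    (forall K, clopen K -> exists n, e n = K).
Proof.
move=> cT sT.
have := @clopen_countable (pE x) cT sT.
move=> /countable_injP [f finj].
have H : forall n : nat, exists K : set T, clopen K /\
   (forall K', clopen K' -> f K' = n -> K' = K).
  move=> n; have [[K [cK fK]]|nK] := pselect (exists K : set T, clopen K /\ f K = n).
    exists K; split => // K' cK' fK'; apply: finj; rewrite ?inE //.
    by rewrite fK fK'.
  exists setT; split; first exact: clopenT.
  by move=> K' cK' fK'; exfalso; apply: nK; exists K'.
have [e he] := choice H.
exists e; split; first by move=> n; case: (he n).
by move=> K cK; exists (f K); case: (he (f K)) => _ h; rewrite -(h K cK).
Qed.


Section ZD.
Variable T : topologicalType.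
Hypotheses (cT : compact [set: T]) (hT : hausdorff_space T)
  (tdT : totally_disconnected [set: T]).

Let normT : normal_space T := compact_normal hT cT.

Lemma sep_closed (A B : set T) : closed A -> closed B -> A `&` B = set0 ->
  exists U V, [/\ open U, open V, A `<=` U, B `<=` V & U `&` V = set0].
Proof.
move=> clA clB AB.
have snA : set_nbhs A (~` B).
  apply/set_nbhsP; exists (~` B); split; first exact: closed_openC.
    by move=> z Az Bz; have : (A `&` B) z by []; rewrite AB.
  by [].
have [W snW clW] := normT clA snA.
have [C [oC AC CW]] := (set_nbhsP _ _).1 snW.
exists C, (~` closure W); split => //.
- exact/closed_openC/closed_closure.
- by move=> z Bz clz; apply: (clW z clz).
- apply/seteqP; split => // z [Cz]; apply; apply: subset_closure; exact: CW.
Qed.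

Lemma clopen_in_cover (x : T) (W : set T) :
  [set z | forall K, clopen K -> K x -> K z] `<=` W -> open W ->
  exists K, [/\ clopen K, K x & K `<=` W].
Proof.
move=> QW oW; apply: contrapT => nK.
pose D := [set K : set T | clopen K /\ K x].
have hne : forall K, D K -> (K `\` W) !=set0.
  move=> K [cK Kx]; apply/set0P/negP => /eqP K0; apply: nK; exists K; split => //.
  by move=> z Kz; apply: contrapT => nWz; have : (K `\` W) z by []; rewrite K0.
pose F := filter_from D (fun K => K `\` W).
have FF : Filter F.
  apply: filter_from_filter; first by exists setT; split => //; exact: clopenT.
  move=> i j [ci xi] [cj xj]; exists (i `&` j); first by split; [exact: clopenI|].
  by move=> z [[iz jz] Wz].
have PF : ProperFilter F by apply: filter_from_proper.
have [z [_ cz]] := cT PF (filterT).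
move: cz; rewrite clusterE => cz.
have zK : forall K, D K -> (K `\` W) z.
  move=> K DK; have := cz (K `\` W) (ex_intro2 _ _ K DK (@subset_refl _ (K `\` W))).
  have cl : closed (K `\` W).
    by apply: closedI; [case: DK => -[]|exact: open_closedC].
  by rewrite -(closure_id _).1.
have Qz : [set z | forall K, clopen K -> K x -> K z] z.
  by move=> K cK Kx; have [] := zK K (conj cK Kx).
by by have [_] := zK setT (conj clopenT I); apply; apply: QW.
Qed.

Lemma quasi_connected (x : T) :
  connected [set z | forall K, clopen K -> K x -> K z].
Proof.
set Q := [set z | _].
have Qx : Q x by [].
have clQ : closed Q.
  have -> : Q = \bigcap_(K in [set K : set T | clopen K /\ K x]) K.
    apply/seteqP; split => z Hz.
      by move=> K [cK Kx]; apply: Hz.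
    by move=> K cK Kx; apply: Hz.
  by apply: closed_bigI => K [[]].
move=> B B0 [Op oOp BOp] [Cl cCl BCl].
pose A1 := Q `&` Cl. pose A2 := Q `&` ~` Op.
have cA1 : closed A1 by exact: closedI.
have cA2 : closed A2 by apply: closedI => //; exact: open_closedC.
have A12 : A1 `&` A2 = set0.
  apply/seteqP; split => // z [[Qz Clz] [_ nOz]].
  have : B z by rewrite BCl.
  by rewrite BOp => -[].
have [U [V [oU oV A1U A2V UV]]] := sep_closed cA1 cA2 A12.
have QUV : Q `<=` U `|` V.
  move=> z Qz; have [Oz|nOz] := pselect (Op z).
    have Bz : B z by rewrite BOp.
    by left; apply: A1U; move: Bz; rewrite BCl.
  by right; apply: A2V.
have [K [cK Kx KUV]] := clopen_in_cover QUV (openU oU oV).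
have cKU : clopen (K `&` U).
  split; first by apply: openI => //; case: cK.
  have -> : K `&` U = K `&` ~` V.
    apply/seteqP; split => z [Kz Hz]; split => //.
      by move=> Vz; have : (U `&` V) z by []; rewrite UV.
    by case: (KUV z Kz).
  by apply: closedI; [case: cK|exact: open_closedC].
have cKV : clopen (K `&` V).
  split; first by apply: openI => //; case: cK.
  have -> : K `&` V = K `&` ~` U.
    apply/seteqP; split => z [Kz Hz]; split => //.
      by move=> Uz; have : (U `&` V) z by []; rewrite UV.
    by case: (KUV z Kz).
  by apply: closedI; [case: cK|exact: open_closedC].
have [Ox|nOx] := pselect (Op x).
  have Bx : B x by rewrite BOp.
  have Ux : U x by apply: A1U; move: Bx; rewrite BCl.
  apply/seteqP; split; first by rewrite BOp => z [].
  move=> z Qz; apply: contrapT => nBz.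
  have nOz : ~ Op z.
    by move=> Oz; apply: nBz; rewrite BOp.
  have Vz : V z by apply: A2V.
  have [_ Uz] : (K `&` U) z by apply: Qz.
  by have : (U `&` V) z by []; rewrite UV.
have Vx : V x by apply: A2V.
case: B0 => b Bb.
have Qb : Q b by move: Bb; rewrite BOp => -[].
have [_ Vb] : (K `&` V) b by apply: Qb.
have Ub : U b by apply: A1U; move: (Bb); rewrite {1}BCl => -[]; split => //.
by have : (U `&` V) b by []; rewrite UV.
Qed.

Lemma stone_zero_dim : zero_dimensional T.
Proof.
move=> x y /eqP xy; apply: contrapT => nK.
have Qy : [set z | forall K, clopen K -> K x -> K z] y.
  move=> K cK Kx; apply: contrapT => nKy; apply: nK; exists K; split => //.
have : connected_component [set: T] x y.
  exists [set z | forall K, clopen K -> K x -> K z] => //; split => //.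
  exact: quasi_connected.
by rewrite tdT // => yx; apply: xy.
Qed.
End ZD.


Lemma clopenC' (T : topologicalType) (A : set T) : clopen A -> clopen (~` A).
Proof. exact: clopenC set0. Qed.

Section Gen.
Variable E : topologicalType.

Definition cutof (A : set E) : set (set E) := [set A; ~` A].

Lemma cutofC (A : set E) : cutof (~` A) = cutof A.
Proof. by rewrite /cutof setCK setUC. Qed.

Lemma noncross (C D : set (set E)) A B : C A -> D B -> A `&` B = set0 ->
  ~ cross C D.
Proof. by move=> CA DB AB /(_ A B CA DB); rewrite AB => /set0P; rewrite eqxx. Qed.

Lemma crossP (C D : set (set E)) : ~ cross C D ->
  exists A B, [/\ C A, D B & A `&` B = set0].
Proof.
move=> nc; apply: contrapT => nex; apply: nc => A B CA DB.
apply/set0P/eqP => AB; apply: nex; by exists A, B.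
Qed.

Lemma cross_sym (C D : set (set E)) : cross C D -> cross D C.
Proof. by move=> c A B DA CB; rewrite setIC; apply: c. Qed.

Lemma cutP (C : set (set E)) : Defs.cut C ->
  exists U, [/\ clopen U, U !=set0, ~` U !=set0 & C = cutof U].
Proof. by []. Qed.

Variable d : nat -> set E.
Hypothesis hd : forall i, clopen (d i).
Hypothesis hsurj : forall K, clopen K -> exists i, d i = K.

Definition atom n p := [set q | forall i, (i < n)%N -> (d i q <-> d i p)].

Lemma atom_self n p : atom n p p.
Proof. by []. Qed.

Lemma atomS n p : atom n.+1 p = atom n p `&` [set q | d n q <-> d n p].
Proof.
apply/seteqP; split => q.
  by move=> h; split => [i lt|]; apply: h => //; apply: ltnW.
move=> [h1 h2] i; rewrite ltnS leq_eqVlt => /orP[/eqP->//|]; exact: h1.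
Qed.

Lemma atom_clopen n p : clopen (atom n p).
Proof.
elim: n => [|n ih].
  have -> : atom 0 p = setT by apply/seteqP; split => // q _ i.
  exact: clopenT.
rewrite atomS; apply: clopenI => //.
have [dp|ndp] := pselect (d n p).
  have -> : [set q | d n q <-> d n p] = d n.
    by apply/seteqP; split => q /=; [case=> _; apply|move=> ?; split].
  exact: hd.
have -> : [set q | d n q <-> d n p] = ~` d n.
  by apply/seteqP; split => q /=; [case=> h _ /h|move=> nq; split].
exact: (clopenC' (hd n)).
Qed.

Lemma atom_sub n m p q : (n <= m)%N -> atom n p q -> atom m q `<=` atom n p.
Proof.
move=> nm apq r arq i lt; have := apq i lt; have := arq i (leq_trans lt nm).
tauto.
Qed.

Lemma atom_disj n m p q : (n <= m)%N -> ~ atom n p q ->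
  atom m q `&` atom n p = set0.
Proof.
move=> nm napq; apply/seteqP; split => // r [arq arp]; apply: napq => i lt.
have := arq i (leq_trans lt nm); have := arp i lt; tauto.
Qed.

Definition GG := [set C | nonperipheral C /\ exists n p, C = cutof (atom n p)].

Lemma atom_noncross n p m q : (n <= m)%N ->
  ~ cross (cutof (atom n p)) (cutof (atom m q)).
Proof.
move=> nm; have [apq|napq] := pselect (atom n p q).
  apply: (@noncross _ _ (~` atom n p) (atom m q)); [by right|by left|].
  apply/seteqP; split => // r [nr /(atom_sub nm apq)].
  by [].
apply: (@noncross _ _ (atom n p) (atom m q)); [by left|by left|].
by rewrite setIC; exact: atom_disj.
Qed.

Lemma GG_compat C D : GG C -> GG D -> compatible C D.
Proof.
move=> [_ [n [p ->]]] [_ [m [q ->]]].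
have [nm|mn] := leqP n m; first exact: atom_noncross.
by move=> /cross_sym; apply: atom_noncross; apply: ltnW.
Qed.

Definition mono m (S : set E) := forall p q, atom m p q -> (S q <-> S p).

Lemma monoC m S : mono m S -> mono m (~` S).
Proof. by move=> h p q /h; rewrite /setC /=; tauto. Qed.

Lemma mono_d k : mono k.+1 (d k).
Proof. by move=> p q /(_ k (ltnSn k)). Qed.

Lemma mono_up k n S : (k <= n)%N -> mono k S -> mono n S.
Proof. by move=> kn h p q apq; apply: h => i lt; apply: apq; exact: leq_trans kn. Qed.

Lemma key_atom m S p s : mono m.+1 S -> S `<=` atom m p -> S s ->
  (exists t, atom m p t /\ ~ S t) -> S = atom m.+1 s.
Proof.
move=> mS Sp Ss [t [apt nSt]].
apply/seteqP; split => r; last by move=> /mS ->.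
move=> Sr; rewrite atomS; split.
  move=> i lt; have := Sp r Sr i lt; have := Sp s Ss i lt; tauto.
apply: contrapT => nrs.
have [ts|nts] := pselect (d m t <-> d m s).
  have h : atom m.+1 s t.
    rewrite atomS; split => //.
    move=> i lt; have := apt i lt; have := Sp s Ss i lt; tauto.
  exact: nSt ((mS s t h).2 Ss).
have h : atom m.+1 r t.
  rewrite atomS; split.
    move=> i lt; have := apt i lt; have := Sp r Sr i lt; tauto.
  move: nrs nts => /= nrs nts; have := pselect (d m s); have := pselect (d m t); have := pselect (d m r); tauto.
exact: nSt ((mS r t h).2 Sr).
Qed.

Lemma peri_cases (A U : set E) (p : E) : A p -> ~ has_two_points A ->
  A `<=` U \/ A `<=` ~` U.
Proof.
move=> Ap nA; have allp : forall q, A q -> q = p.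
  by move=> q Aq; apply: contrapT => qp; apply: nA; exists q, p; split.
have [Up|nUp] := pselect (U p).
  by left; move=> q /allp ->.
by right; move=> q /allp ->.
Qed.

Lemma GG_max g : nonperipheral g -> ~ GG g -> exists2 C, GG C & cross g C.
Proof.
move=> ng nGg; apply: contrapT => nex.
have nc : forall C, GG C -> ~ cross g C by move=> C GC cg; apply: nex; exists C.
have [U [cU [u Uu] [v nUv] eg]] := cutP ng.1.
have comp : forall n p, let A := atom n p in
    [\/ A `<=` U, A `<=` ~` U, U `<=` A | ~` U `<=` A].
  move=> n p A.
  have [nA|pA] := pselect (nonperipheral (cutof A)).
    have [S [B [gS AB SB]]] := crossP (nc _ (conj nA (ex_intro _ n (ex_intro _ p erefl)))).
    move: gS AB SB; rewrite eg => -[]-> -[]-> /seteqP[SB0 _].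
    - by apply: Or42 => q Aq Uq; exact: (SB0 q (conj Uq Aq)).
    - apply: Or43 => q Uq; apply: contrapT => nAq; exact: (SB0 q (conj Uq nAq)).
    - apply: Or41 => q Aq; apply: contrapT => nUq; exact: (SB0 q (conj nUq Aq)).
    - apply: Or44 => q Uq; apply: contrapT => nAq; exact: (SB0 q (conj Uq nAq)).
  have [tA|ntA] := pselect (has_two_points A); last first.
    by case: (peri_cases U (@atom_self n p) ntA) => h; [apply: Or41|apply: Or42].
  have [tcA|ntcA] := pselect (has_two_points (~` A)); last first.
    have [[r nAr]|nr] := pselect (exists r, ~ A r); last first.
      apply: Or43 => q _; apply: contrapT => nAq; apply: nr; by exists q.
    case: (peri_cases U nAr ntcA) => h.
      by apply: Or44 => q nUq; apply: contrapT => nAq; apply: nUq; apply: h.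
    by apply: Or43 => q Uq; apply: contrapT => nAq; exact: (h q nAq Uq).
  exfalso; apply: pA; split.
    exists A; split => //; first exact: atom_clopen.
      by exists p; exact: atom_self.
    by case: tcA => a [b [? ? ?]]; exists a.
  by move=> S /= [->|->].
have [k dk] := hsurj cU.
have exm : exists m, `[< mono m U >].
  by exists k.+1; apply/asboolP; rewrite -dk; exact: mono_d.
case: (ex_minnP exm) => m /asboolP mU mmin.
case: m mU mmin => [|m] mU mmin.
  by apply: nUv; apply/(mU u v).
have nm : ~ mono m U by move=> h; have := mmin m (asboolT h); rewrite ltnn.
have [p [q [apq nUpq]]] : exists p q, atom m p q /\ ~ (U q <-> U p).
  apply: contrapT => nex2; apply: nm => p q apq; apply: contrapT => h.
  by apply: nex2; exists p, q.
set A := atom m p.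
have mixed : exists s t, [/\ A s, A t, U s & ~ U t].
  have [Uq|nUq] := pselect (U q).
    exists q, p; split; [exact: apq|exact: atom_self|exact: Uq|tauto].
  exists p, q; split; [exact: atom_self|exact: apq| |tauto].
  by apply: contrapT => nUp; apply: nUpq; tauto.
case: mixed => s [t [As At Us nUt]].
case: (comp m p) => h.
- by apply: nUt; apply: h.
- by apply: (h s As).
- have eU := key_atom mU h Us (ex_intro _ t (conj At nUt)).
  by apply: nGg; split => //; exists m.+1, s; rewrite eg eU.
- have eU := key_atom (monoC mU) h nUt (ex_intro _ s (conj As (fun h => h Us))).
  by apply: nGg; split => //; exists m.+1, t; rewrite eg -eU cutofC.
Qed.

Lemma mono_noncross U n p k : d k = U -> (k < n)%N ->
  ~ cross (cutof U) (cutof (atom n p)).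
Proof.
move=> dk kn; have mU : mono n U.
  rewrite -dk; apply: mono_up kn _; exact: mono_d.
have [Up|nUp] := pselect (U p).
  apply: (@noncross _ _ (~` U) (atom n p)); [by right|by left|].
  by apply/seteqP; split => // q [nUq /mU aq]; apply: nUq; apply/aq.
apply: (@noncross _ _ U (atom n p)); [by left|by left|].
by apply/seteqP; split => // q [Uq /mU aq]; apply: nUp; apply/aq.
Qed.

Lemma GG_fin g : nonperipheral g -> finite_set [set C | GG C /\ cross g C].
Proof.
move=> ng; have [U [cU _ _ eg]] := cutP ng.1.
have [k dk] := hsurj cU.
pose F (it : 'I_k.+1 * {ffun 'I_k.+1 -> bool}) :=
  cutof [set q | forall j : 'I_k.+1, (j < it.1)%N -> (d j q <-> it.2 j)].
apply: (sub_finite_set _ (finite_image F (@finite_finset _ setT))).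
move=> C [[_ [n [p eC]]] cr].
have nk : (n <= k)%N.
  rewrite leqNgt; apply/negP => kn; apply: (mono_noncross (p:=p) dk kn).
  by rewrite -eg -eC.
exists (inord n, [ffun j : 'I_k.+1 => `[< d j p >]]) => //.
rewrite eC /F; congr cutof; apply/seteqP; split => q /= h.
  move=> i lt; have ik : (i < k.+1)%N by rewrite ltnS; apply: leq_trans (ltnW lt) nk.
  have := h (Ordinal ik); rewrite /= inordK ?ltnS // ffunE => /(_ lt) [h1 h2].
  split => [/h1/asboolP //|dp]; apply: h2; exact/asboolP.
move=> j; rewrite inordK ?ltnS // => lt; rewrite ffunE.
split => [/(h j lt) dp|dp]; first exact/asboolP.
by apply/(h j lt); exact/asboolP.
Qed.

Lemma GG_countable : countable GG.
Proof.
pose F (x : nat * seq bool) :=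
  cutof [set q | forall i, (i < x.1)%N -> (d i q <-> nth false x.2 i)].
have sub : GG `<=` F @` setT.
  move=> C [_ [n [p ->]]]; exists (n, mkseq (fun i => `[< d i p >]) n) => //.
  rewrite /F; congr cutof; apply/seteqP; split => q /= h i lt.
    have := h i lt; rewrite nth_mkseq // => -[h1 h2].
    split => [/h1/asboolP //|dp]; apply: h2; exact/asboolP.
  rewrite nth_mkseq //; split => [/(h i lt) dp|dp]; first exact/asboolP.
  by apply/(h i lt); exact/asboolP.
apply: (sub_countable (subset_card_le sub)).
apply: (sub_countable (card_image_le _ _)); exact: countableP.
Qed.

Lemma GG_pants : pants_decomposition GG.
Proof.
split.
- exact: GG_countable.
- by move=> C [].
- exact: GG_compat.
- exact: GG_max.
- by move=> g ng _; exact: GG_fin.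
Qed.
End Gen.


Lemma two_sub (T : topologicalType) (A : set T) x y : A `<=` [set x; y] -> has_two_points A ->
  A = [set x; y].
Proof.
move=> Axy [p [q [Ap Aq pq]]]; apply/seteqP; split => // r /= [->|->].
  by case: (Axy p Ap) => ep; [rewrite -ep|case: (Axy q Aq) => eq;
    [rewrite -eq|exfalso; apply: pq; rewrite ep eq]].
case: (Axy q Aq) => eq; last by rewrite -eq.
case: (Axy p Ap) => ep; last by rewrite -ep.
by exfalso; apply: pq; rewrite ep eq.
Qed.

Lemma cutof_eq (T : topologicalType) (A B : set T) : cutof A = cutof B -> A = B \/ A = ~` B.
Proof. by move=> e; have : cutof B A by rewrite -e; left. Qed.

Lemma ne_in (T : Type) (A B : set T) : A !=set0 -> A `<=` B -> B !=set0.
Proof. by move=> [z Az] AB; exists z; apply: AB. Qed.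

Section Fwd.
Variable E : topologicalType.
Variables (U : set E) (x y : E) (G : set (set (set E))).
Hypotheses (xy : x <> y) (eU : U = [set x; y]).
Hypotheses (Gnp : forall C, G C -> nonperipheral C)
  (Gcomp : forall C D, G C -> G D -> compatible C D)
  (Gmax : forall g, nonperipheral g -> ~ G g -> exists2 C, G C & cross g C)
  (Gg : G (cutof U)).
Let gamma := cutof U.

Lemma Ux : U x. Proof. by rewrite eU; left. Qed.

Lemma orient D : G D -> D = gamma \/
  exists Z, [/\ D = cutof Z, Z `<=` ~` U, has_two_points Z & clopen Z].
Proof.
move=> GD; have [[W [cW _ _ eD]] two] := Gnp GD.
have [S [T [gS DT ST]]] := crossP (Gcomp Gg GD).
have twoT := two T DT.
have cT : clopen T by move: DT; rewrite eD => -[->|->] //; exact: clopenC'.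
have eDT : D = cutof T by move: DT; rewrite eD => -[->|->] //; rewrite cutofC.
case: gS => eS; rewrite eS in ST.
  right; exists T; split => // z Tz Uz.
  by have : (U `&` T) z by []; rewrite ST.
left; rewrite eDT /gamma; congr cutof; rewrite eU; apply: two_sub => //.
move=> z Tz; rewrite -eU; apply: contrapT => nUz.
by have : (~` U `&` T) z by []; rewrite ST.
Qed.

Definition adjw C X g := [/\ G C, gamma <> C, C = cutof X, X `<=` ~` U &
  has_two_points X] /\ [/\ clopen X, nonperipheral g, cross g gamma, cross g C &
  forall C', G C' -> cross g C' -> C' = gamma \/ C' = C].

Lemma adj_w C : Defs.adjacent G gamma C -> exists X g, adjw C X g.
Proof.
move=> [_ GC gC [g [ng cgg cgC gonly]]].
case: (orient GC) => [eC|[X [eC XU tX cX]]]; first by exfalso; apply: gC.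
by exists X, g; split; split.
Qed.

Lemma up C X g Y : adjw C X g -> X `<=` Y -> Y `<=` ~` U -> G (cutof Y) ->
  cutof Y = gamma \/ cutof Y = C.
Proof.
move=> [[GC gC eC XU tX] [cX ng cgg cgC gonly]] XY YU GY; apply: gonly => //.
move=> S T gS [->|->].
  by apply: (ne_in (cgC S X gS _)) => [|z [Sz Xz]]; [rewrite eC; left|split; [|apply: XY]].
apply: (ne_in (cgg S U gS _)) => [|z [Sz Uz]]; first by left.
by split => // Yz; apply: (YU z Yz).
Qed.

Lemma adj_disj C1 X1 g1 C2 X2 g2 : adjw C1 X1 g1 -> adjw C2 X2 g2 -> C1 <> C2 ->
  X1 `&` X2 = set0.
Proof.
move=> a1 a2 C12.
have [[GC1 gC1 eC1 XU1 t1] [c1 _ _ _ _]] := a1.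
have [[GC2 gC2 eC2 XU2 t2] [c2 _ _ _ _]] := a2.
have [S [T [C1S C2T ST]]] := crossP (Gcomp GC1 GC2).
move: C1S C2T ST; rewrite eC1 eC2 => -[]-> -[]-> ST //.
- have X12 : X1 `<=` X2.
    by move=> z X1z; apply: contrapT => nX2z; have : (X1 `&` ~` X2) z by []; rewrite ST.
  case: (up a1 X12 XU2); [by rewrite -eC2|by rewrite -eC2=> /esym|by rewrite -eC2 => /esym].
- have X21 : X2 `<=` X1.
    by move=> z X2z; apply: contrapT => nX1z; have : (~` X1 `&` X2) z by []; rewrite ST.
  case: (up a2 X21 XU1); [by rewrite -eC1|by rewrite -eC1=> /esym|by rewrite -eC1].
- have nx1 : ~ X1 x by move=> /XU1; apply; exact: Ux.
  have nx2 : ~ X2 x by move=> /XU2; apply; exact: Ux.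
  by have : (~` X1 `&` ~` X2) x by []; rewrite ST.
Qed.

Lemma relZ D Z C X g : G D -> D = cutof Z -> Z `<=` ~` U -> adjw C X g ->
  [\/ Z `&` X = set0, Z `<=` X, D = gamma | D = C].
Proof.
move=> GD eD ZU w; have [[GC gC eC XU tX] _] := w.
have [S [T [DS CT ST]]] := crossP (Gcomp GD GC).
move: DS CT ST; rewrite eD eC => -[]-> -[]-> ST.
- exact: Or41.
- apply: Or42 => z Zz; apply: contrapT => nXz.
  by have : (Z `&` ~` X) z by []; rewrite ST.
- have XZ : X `<=` Z.
    move=> z Xz; apply: contrapT => nZz.
    by have : (~` Z `&` X) z by []; rewrite ST.
  have GZ : G (cutof Z) by rewrite -eD.
  by case: (up w XZ ZU GZ) => e; [apply: Or43|apply: Or44; rewrite e eC].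
- have nx1 : ~ X x by move=> /XU; apply; exact: Ux.
  have nx2 : ~ Z x by move=> /ZU; apply; exact: Ux.
  by have : (~` Z `&` ~` X) x by []; rewrite ST.
Qed.

Lemma fwd_main : valence_le2 G gamma.
Proof.
move=> a b c ha hb hc; apply: contrapT => neq.
have ab : a <> b by move=> e; apply: neq; apply: Or31.
have ac : a <> c by move=> e; apply: neq; apply: Or32.
have bc : b <> c by move=> e; apply: neq; apply: Or33.
have [X1 [g1 w1]] := adj_w ha.
have [X2 [g2 w2]] := adj_w hb.
have [X3 [g3 w3]] := adj_w hc.
have d12 := adj_disj w1 w2 ab.
have d13 := adj_disj w1 w3 ac.
have d23 := adj_disj w2 w3 bc.
have [[GC1 gC1 eC1 XU1 t1] [c1 _ _ _ _]] := w1.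
have [[GC2 gC2 eC2 XU2 t2] [c2 _ _ _ _]] := w2.
have [[GC3 gC3 eC3 XU3 t3] [c3 _ _ _ _]] := w3.
have Uy : U y by rewrite eU; right.
set Y := X1 `|` X2.
have YU : Y `<=` ~` U by move=> z [/XU1|/XU2].
have nYx : ~ Y x by move=> /YU; apply; exact: Ux.
have nYy : ~ Y y by move=> /YU; apply.
have hY : nonperipheral (cutof Y).
  split.
    exists Y; split; first exact: clopenU.
      by case: t1 => p [q [p1 _ _]]; exists p; left.
    by exists x.
    by [].
  move=> S [->|->].
    by case: t1 => p [q [p1 q1 pq]]; exists p, q; split => //; left.
  by exists x, y.
have [GY|nGY] := pselect (G (cutof Y)).
  have X1Y : X1 `<=` Y by move=> z; left.
  case: (up w1 X1Y YU GY) => e.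
    case/cutof_eq: e => eY.
      case: t1 => p [q [p1 _ _]].
      have : Y p by left.
      by rewrite eY => Up; apply: (XU1 p p1).
    case: t3 => p [q [p3 _ _]].
    have : Y p by rewrite eY; apply: XU3.
    case => [p1|p2].
      by have : (X1 `&` X3) p by []; rewrite d13.
    by have : (X2 `&` X3) p by []; rewrite d23.
  rewrite eC1 in e; case/cutof_eq: e => eY.
    case: t2 => p [q [p2 _ _]].
    have : Y p by right.
    by rewrite eY => p1; have : (X1 `&` X2) p by []; rewrite d12.
  by apply: nYx; rewrite eY => /XU1; apply; exact: Ux.
have [D GD cr] := Gmax hY nGY.
case: (orient GD) => [eD|[Z [eD ZU tZ cZ]]].
  apply: (@noncross _ _ _ Y U _ _ _ cr); [by left|by rewrite eD; left|].
  by apply/seteqP; split => // z [/YU].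
have hA : forall A, cutof Y A -> forall B, D B -> A `&` B = set0 -> False.
  by move=> A YA B DB AB; exact: (@noncross _ _ _ A B YA DB AB cr).
have nYX1 : ~` Y `&` X1 = set0.
  by apply/seteqP; split => // z [nYz X1z]; apply: nYz; left.
have nYX2 : ~` Y `&` X2 = set0.
  by apply/seteqP; split => // z [nYz X2z]; apply: nYz; right.
have noG : D <> gamma.
  move=> eDg; apply: (hA Y (or_introl erefl) U); first by rewrite eDg; left.
  by apply/seteqP; split => // z [/YU].
have sub1 : forall Z', Z' `<=` Y -> D Z' -> False.
  move=> Z' ZY DZ; apply: (hA (~` Y) (or_intror erefl) Z' DZ).
  by apply/seteqP; split => // z [nYz /ZY].
have DZ : D Z by rewrite eD; left.
case: (relZ GD eD ZU w1) => [Z1|Z1|//|eDa].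
- case: (relZ GD eD ZU w2) => [Z2|Z2|//|eDb].
  + apply: (hA Y (or_introl erefl) Z DZ); apply/seteqP; split => // z [[X1z|X2z] Zz].
      by have : (Z `&` X1) z by []; rewrite Z1.
    by have : (Z `&` X2) z by []; rewrite Z2.
  + by apply: (sub1 Z) => // z /Z2 ?; right.
  + by apply: (sub1 X2); [move=> z ?; right|rewrite eDb eC2; left].
- by apply: (sub1 Z) => // z /Z1 ?; left.
- by apply: (sub1 X1); [move=> z ?; left|rewrite eDa eC1; left].
Qed.
End Fwd.


Lemma cut_neq (T : topologicalType) (A B : set T) p q :
  ~ (A p <-> B p) -> (A q <-> B q) -> cutof A <> cutof B.
Proof.
move=> hp hq /cutof_eq [e|e]; first by apply: hp; rewrite e.
by move: hq; rewrite e /setC /=; tauto.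
Qed.

Lemma np_of (T : topologicalType) (S : set T) p q r s : clopen S ->
  S p -> S q -> p <> q -> ~ S r -> ~ S s -> r <> s -> nonperipheral (cutof S).
Proof.
move=> cS Sp Sq pq Sr Ss rs; split.
  by exists S; split => //; [exists p|exists r].
by move=> U [->|->]; [exists p, q|exists r, s].
Qed.

Lemma cross_pts (T : topologicalType) (W S : set T) p1 p2 p3 p4 :
  W p1 -> S p1 -> W p2 -> ~ S p2 -> ~ W p3 -> S p3 -> ~ W p4 -> ~ S p4 ->
  cross (cutof W) (cutof S).
Proof.
move=> ? ? ? ? ? ? ? ? A B [->|->] [->|->].
- by exists p1.
- by exists p2.
- by exists p3.
- by exists p4.
Qed.

Lemma pneq (T : Type) (A : set T) p q : A p -> ~ A q -> p <> q.
Proof. by move=> Ap nAq e; apply: nAq; rewrite -e. Qed.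

Section Conv.
Variable E : topologicalType.
Variables (Vs V1 U2 V1a V2a U2a : set E) (x y z a b c dd : E).
Variable e : nat -> set E.
Hypotheses (he : forall n, clopen (e n)) (hes : forall K, clopen K -> exists n, e n = K).
Hypotheses (cVs : clopen Vs) (cV1 : clopen V1) (cU2 : clopen U2) (cV1a : clopen V1a)
  (cV2a : clopen V2a) (cU2a : clopen U2a).
Hypotheses (sV1 : forall q, V1 q -> Vs q) (sU2 : forall q, U2 q -> ~ Vs q)
  (sV1a : forall q, V1a q -> V1 q) (sV2a : forall q, V2a q -> Vs q /\ ~ V1 q)
  (sU2a : forall q, U2a q -> U2 q).
Hypotheses (xU2 : U2 x) (xU2a : U2a x) (yU2 : U2 y) (yU2a : ~ U2a y)
  (zVs : ~ Vs z) (zU2 : ~ U2 z) (aV1 : V1 a) (aV1a : V1a a) (bV1 : V1 b) (bV1a : ~ V1a b)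
  (cVs' : Vs c) (cV1' : ~ V1 c) (cV2a' : V2a c) (dVs : Vs dd) (dV1 : ~ V1 dd) (dV2a : ~ V2a dd).

Ltac spec q := have := @sV1 q; have := @sU2 q; have := @sV1a q; have := @sV2a q;
  have := @sU2a q.

Definition dd3 n := match n with 0 => Vs | 1 => U2 `|` V1 | 2 => U2a `|` V1a `|` V2a
  | n'.+3 => e n' end.

Lemma hd3 n : clopen (dd3 n).
Proof.
case: n => [|[|[|n]]] /=.
- exact: cVs.
- exact: (clopenU cU2 cV1).
- exact: (clopenU (clopenU cU2a cV1a) cV2a).
- exact: he.
Qed.

Lemma hs3 K : clopen K -> exists n, dd3 n = K.
Proof. by move=> /hes [n en]; exists n.+3. Qed.

Let V2 := Vs `\` V1.
Let U1 := ~` Vs `\` U2.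
Let gamma := cutof Vs.

Lemma atom1 p : atom dd3 1 p = [set q | Vs q <-> Vs p].
Proof.
apply/seteqP; split => q /= h; first exact: (h 0%N).
by case => // _; exact: h.
Qed.

Lemma atom2 p : atom dd3 2 p =
  [set q | (Vs q <-> Vs p) /\ ((U2 `|` V1) q <-> (U2 `|` V1) p)].
Proof.
apply/seteqP; split => q /= h; first by split; [exact: (h 0%N)|exact: (h 1%N)].
by case => [|[|//]] _; [exact: h.1|exact: h.2].
Qed.

Lemma atom2_cases p : [\/ atom dd3 2 p = V1, atom dd3 2 p = V2,
  atom dd3 2 p = U2 | atom dd3 2 p = U1].
Proof.
rewrite atom2; have h1 := @sV1 p; have h2 := @sU2 p.
have [Vp|nVp] := pselect (Vs p); have [Dp|nDp] := pselect (U2 p \/ V1 p).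
- apply: Or41; apply/seteqP; split => q /=; spec q; rewrite /=; tauto.
- apply: Or42; apply/seteqP; split => q /=; spec q; rewrite /V2 /=; tauto.
- apply: Or43; apply/seteqP; split => q /=; spec q; rewrite /=; tauto.
- apply: Or44; apply/seteqP; split => q /=; spec q; rewrite /U1 /=; tauto.
Qed.

Definition meas3 (W : set E) := forall q r, atom dd3 3 q r -> (W r <-> W q).

Lemma adj_gen W C : nonperipheral (cutof W) -> meas3 W ->
  cross (cutof W) gamma -> cross (cutof W) C -> GG dd3 C -> gamma <> C ->
  GG dd3 gamma ->
  (forall S, [\/ S = V1, S = V2, S = U2 | S = U1] ->
     cross (cutof W) (cutof S) -> cutof S = C) ->
  Defs.adjacent (GG dd3) gamma C.
Proof.
move=> nW mW cWg cWC GC gC Gg hS; split => //; exists (cutof W); split => //.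
move=> C' [_ [n [p ->]]] cr.
case: n cr => [|[|[|n]]] cr.
- exfalso; apply: (@noncross _ _ _ W (~` atom dd3 0 p) _ _ _ cr); [by left|by right|].
  by apply/seteqP; split => // q [_ /=]; apply => i.
- left; rewrite atom1 /gamma.
  have [Vp|nVp] := pselect (Vs p).
    congr cutof; apply/seteqP; split => q /=; tauto.
  rewrite -cutofC; congr cutof; apply/seteqP; split => q /=; rewrite /setC /=; have := pselect (Vs q); tauto.
- right; case: (atom2_cases p) => ea; rewrite ea; apply: hS; rewrite -?ea //.
  + exact: Or41.
  + exact: Or42.
  + exact: Or43.
  + exact: Or44.
- exfalso.
  have sub : atom dd3 n.+3 p `<=` atom dd3 3 p.
    by apply: atom_sub; [rewrite !ltnS|exact: atom_self].
  have [Wp|nWp] := pselect (W p).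
    apply: (@noncross _ _ _ (~` W) (atom dd3 n.+3 p) _ _ _ cr); [by right|by left|].
    by apply/seteqP; split => // q [nWq /sub /mW h]; apply: nWq; apply/h.
  apply: (@noncross _ _ _ W (atom dd3 n.+3 p) _ _ _ cr); [by left|by left|].
  by apply/seteqP; split => // q [Wq /sub /mW h]; apply: nWp; apply/h.
Qed.

Ltac pf q := spec q; rewrite /V2 /U1 /=; tauto.

Lemma noncr4 (W S : set E) : [\/ W `&` S = set0, W `&` ~` S = set0,
  ~` W `&` S = set0 | ~` W `&` ~` S = set0] -> ~ cross (cutof W) (cutof S).
Proof.
case=> h; apply: (noncross _ _ h); by [left|right].
Qed.

Lemma ab_ne : a <> b. Proof. exact: (pneq aV1a bV1a). Qed.
Lemma xy_ne : x <> y. Proof. exact: (pneq xU2a yU2a). Qed.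
Lemma cd_ne : c <> dd. Proof. exact: (pneq cV2a' dV2a). Qed.
Lemma aVs : Vs a. Proof. by apply: sV1. Qed.
Lemma bVs : Vs b. Proof. by apply: sV1. Qed.
Lemma xVs : ~ Vs x. Proof. by apply: sU2. Qed.
Lemma yVs : ~ Vs y. Proof. by apply: sU2. Qed.

Lemma Gg : GG dd3 gamma.
Proof.
split; first exact: (np_of cVs aVs bVs ab_ne xVs yVs xy_ne).
exists 1%N, a; rewrite atom1 /gamma; congr cutof; apply/seteqP; split => q /=.
  by move=> Vq; split => // _; exact: aVs.
by case=> _; apply; exact: aVs.
Qed.

Lemma G1 : GG dd3 (cutof V1).
Proof.
split; first exact: (np_of cV1 aV1 bV1 ab_ne cV1' dV1 cd_ne).
exists 2%N, a; rewrite atom2; congr cutof; apply/seteqP; split => q /=;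
  have := aVs; spec q; spec a; tauto.
Qed.

Lemma G2 : GG dd3 (cutof V2).
Proof.
have cV2 : clopen V2 by apply: clopenI => //; exact: clopenC'.
split; first by apply: (np_of cV2 (p:=c) (q:=dd) (r:=a) (s:=b));
  [pf c|pf dd|exact: cd_ne|pf a|pf b|exact: ab_ne].
exists 2%N, c; rewrite atom2; congr cutof; apply/seteqP; split => q /=;
  spec q; spec c; rewrite /V2 /=; tauto.
Qed.

Lemma G3 : GG dd3 (cutof U2).
Proof.
split; first by apply: (np_of cU2 (p:=x) (q:=y) (r:=z) (s:=a));
  [exact: xU2|exact: yU2|exact: xy_ne|exact: zU2|pf a|move=> ez; apply: zVs; rewrite ez; exact: aVs].
exists 2%N, x; rewrite atom2; congr cutof; apply/seteqP; split => q /=;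
  have := xVs; spec q; spec x; tauto.
Qed.

Lemma m3 (W : set E) (F : Prop -> Prop -> Prop -> Prop) :
  (forall A A' B B' C C', (A <-> A') -> (B <-> B') -> (C <-> C') ->
     (F A B C <-> F A' B' C')) ->
  (forall q, W q <-> F (dd3 0 q) (dd3 1 q) (dd3 2 q)) -> meas3 W.
Proof.
by move=> Fp hW q r h; rewrite !hW; apply: Fp; apply: h.
Qed.

Lemma conv_main : ~ valence_le2 (GG dd3) gamma.
Proof.
have cV2 : clopen V2 by apply: clopenI => //; exact: clopenC'.
have gV1 : gamma <> cutof V1 by apply: (cut_neq (p:=c) (q:=a)); rewrite /=; have := aVs; tauto.
have gV2 : gamma <> cutof V2 by apply: (cut_neq (p:=a) (q:=c)); [pf a|pf c].
have gU2 : gamma <> cutof U2 by apply: (cut_neq (p:=a) (q:=z)); [pf a|pf z].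
have ad1 : Defs.adjacent (GG dd3) gamma (cutof V1).
  apply: (@adj_gen (U2 `|` V1a)).
  - apply: (np_of (clopenU cU2 cV1a) (p:=x) (q:=y) (r:=z) (s:=c));
      [pf x|pf y|exact: xy_ne|pf z|pf c|move=> ez; apply: zVs; rewrite ez; exact: cVs'].
  - apply: (m3 (F := fun A B C => B /\ (~ A \/ C))); first by move=> *; tauto.
    move=> q; rewrite /=; spec q; tauto.
  - by apply: (@cross_pts _ _ _ a x b z); [pf a|pf a|pf x|pf x|pf b|pf b|pf z|pf z].
  - by apply: (@cross_pts _ _ _ a x b z); [pf a|pf a|pf x|pf x|pf b|pf b|pf z|pf z].
  - exact: G1.
  - exact: gV1.
  - exact: Gg.
  - move=> S [->|->|->|->] cr //; exfalso; apply: (noncr4 _ cr).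
    + by apply: Or41; apply/seteqP; split => // q /=; spec q; rewrite /V2 /=; tauto.
    + by apply: Or43; apply/seteqP; split => // q /=; spec q; rewrite /V2 /=; tauto.
    + by apply: Or41; apply/seteqP; split => // q /=; spec q; rewrite /U1 /=; tauto.
have ad2 : Defs.adjacent (GG dd3) gamma (cutof V2).
  apply: (@adj_gen (U2 `|` V2a)).
  - apply: (np_of (clopenU cU2 cV2a) (p:=x) (q:=y) (r:=z) (s:=dd));
      [pf x|pf y|exact: xy_ne|pf z|pf dd|move=> ez; apply: zVs; rewrite ez; exact: dVs].
  - apply: (m3 (F := fun A B C => (B /\ ~ A) \/ (A /\ ~ B /\ C))); first by move=> *; tauto.
    move=> q; rewrite /=; spec q; tauto.
  - by apply: (@cross_pts _ _ _ c x dd z); [pf c|pf c|pf x|pf x|pf dd|pf dd|pf z|pf z].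
  - by apply: (@cross_pts _ _ _ c x dd z); [pf c|pf c|pf x|pf x|pf dd|pf dd|pf z|pf z].
  - exact: G2.
  - exact: gV2.
  - exact: Gg.
  - move=> S [->|->|->|->] cr //; exfalso; apply: (noncr4 _ cr).
    + by apply: Or41; apply/seteqP; split => // q /=; spec q; rewrite /V2 /=; tauto.
    + by apply: Or43; apply/seteqP; split => // q /=; spec q; rewrite /V2 /=; tauto.
    + by apply: Or41; apply/seteqP; split => // q /=; spec q; rewrite /U1 /=; tauto.
have ad3 : Defs.adjacent (GG dd3) gamma (cutof U2).
  apply: (@adj_gen (U2a `|` V1)).
  - apply: (np_of (clopenU cU2a cV1) (p:=x) (q:=a) (r:=z) (s:=c));
      [pf x|pf a|move=> ex; apply: xVs; rewrite ex; exact: aVs|pf z|pf c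
      |move=> ez; apply: zVs; rewrite ez; exact: cVs'].
  - apply: (m3 (F := fun A B C => (A /\ B) \/ (~ A /\ C))); first by move=> *; tauto.
    move=> q; rewrite /=; spec q; tauto.
  - by apply: (@cross_pts _ _ _ a x c z); [pf a|pf a|pf x|pf x|pf c|pf c|pf z|pf z].
  - by apply: (@cross_pts _ _ _ x a y z); [pf x|pf x|pf a|pf a|pf y|pf y|pf z|pf z].
  - exact: G3.
  - exact: gU2.
  - exact: Gg.
  - move=> S [->|->|->|->] cr //; exfalso; apply: (noncr4 _ cr).
    + by apply: Or43; apply/seteqP; split => // q /=; spec q; rewrite /V2 /=; tauto.
    + by apply: Or41; apply/seteqP; split => // q /=; spec q; rewrite /V2 /=; tauto.
    + by apply: Or41; apply/seteqP; split => // q /=; spec q; rewrite /U1 /=; tauto.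
move=> vl; case: (vl _ _ _ ad1 ad2 ad3).
- by apply: (cut_neq (p:=a) (q:=x)); [pf a|pf x].
- by apply: (cut_neq (p:=a) (q:=z)); [pf a|pf z].
- by apply: (cut_neq (p:=c) (q:=z)); [pf c|pf z].
Qed.
End Conv.

Lemma get4 (S : {set 'I_7}) : (4 <= #|S|)%N ->
  exists i1 i2 i3 i4, [/\ i1 \in S, i2 \in S, i3 \in S, i4 \in S &
   [/\ i1 != i2, i1 != i3, i1 != i4, i2 != i3 & (i2 != i4) && (i3 != i4)]].
Proof.
rewrite cardE => h4.
have u := enum_uniq (mem S).
have m : forall i, i \in enum (mem S) -> i \in S by move=> i; rewrite mem_enum.
move: h4 u m; case: (enum (mem S)) => [|i1 [|i2 [|i3 [|i4 r]]]] //= _.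
rewrite !inE !negb_or => /andP[/and4P[? ? ? _] /andP[/and3P[? ? _] /andP[/andP[? _] _]]] m.
exists i1, i2, i3, i4; split; try (apply: m; rewrite !inE eqxx ?orbT //).
by split => //; apply/andP.
Qed.

Lemma four_of (T : Type) (f : 'I_7 -> T) (A : set T) : injective f ->
  exists B : set T, (B = A \/ B = ~` A) /\ exists p1 p2 p3 p4, [/\ B p1, B p2, B p3, B p4 &
   [/\ p1 <> p2, p1 <> p3, p1 <> p4, p2 <> p3 & p2 <> p4 /\ p3 <> p4]].
Proof.
move=> fi.
pose S : {set 'I_7} := [set i : 'I_7 | `[< A (f i) >]]%SET.
have ne : forall i j : 'I_7, i != j -> f i <> f j by move=> i j /eqP ij /fi.
have hS : (4 <= #|S|)%N \/ (4 <= #|~: S|)%N.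
  have := cardsC S; rewrite card_ord => e7.
  case: (leqP 4 #|S|) => h; [by left|right].
  by move: e7 h; set m := #|S|; set k := #|~: S|; lia.
case: hS => /get4 [i1 [i2 [i3 [i4 [m1 m2 m3 m4 [n12 n13 n14 n23 /andP[n24 n34]]]]]]].
  exists A; split; first by left.
  exists (f i1), (f i2), (f i3), (f i4); rewrite /S ?inE in m1 m2 m3 m4.
  by split => //; split; try split; apply: ne.
exists (~` A); split; first by right.
exists (f i1), (f i2), (f i3), (f i4); rewrite /S ?inE in m1 m2 m3 m4.
have nA : forall i, ~~ `[< A (f i) >] -> ~ A (f i) by move=> i /negP h /asboolP.
split; [exact: nA|exact: nA|exact: nA|exact: nA|].
by split => //; try split; apply: ne.
Qed.

Lemma three (E : topologicalType) (gamma : set (set E)) (S : set E) :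
  nonperipheral gamma -> ~ outermost gamma -> gamma S ->
  exists p q r, [/\ S p, S q, S r & [/\ p <> q, p <> r & q <> r]].
Proof.
move=> ng nog gS; have [p [q [Sp Sq pq]]] := ng.2 S gS.
apply: contrapT => nex; apply: nog; split => //; exists S; split => //.
exists p, q; split => //; apply/seteqP; split => [r Sr|r [->|->]] //=.
apply: contrapT => nr; apply: nex; exists p, q, r; split => //; split => //.
  by move=> e; apply: nr; left.
by move=> e; apply: nr; right.
Qed.

Lemma clopenI' (T : topologicalType) (A B : set T) : clopen A -> clopen B -> clopen (A `&` B).
Proof. exact: clopenI. Qed.
Lemma clopenU' (T : topologicalType) (A B : set T) : clopen A -> clopen B -> clopen (A `|` B).
Proof. exact: clopenU. Qed.

Ltac clo := repeat first [assumption | apply: clopenI' | apply: clopenU' | apply: clopenC'].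

Lemma conv_build (E : topologicalType) (ZD : zero_dimensional E) (e : nat -> set E)
  (he : forall n, clopen (e n)) (hes : forall K, clopen K -> exists n, e n = K)
  (Vs : set E) (cVs : clopen Vs) (a b c dd x y z : E)
  (hVa : Vs a) (hVb : Vs b) (hVc : Vs c) (hVd : Vs dd)
  (hx : ~ Vs x) (hy : ~ Vs y) (hz : ~ Vs z)
  (ab : a <> b) (ac : a <> c) (ad : a <> dd) (bc : b <> c) (bd : b <> dd) (cd : c <> dd)
  (xy : x <> y) (xz : x <> z) (yz : y <> z) :
  exists G, [/\ pants_decomposition G, G (cutof Vs) & ~ valence_le2 G (cutof Vs)].
Proof.
have sep : forall p q : E, p <> q -> exists K, [/\ clopen K, K p & ~ K q].
  by move=> p q /eqP pq; have [K [? ? ?]] := ZD p q pq; exists K.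
have [Kac [cac ac1 ac2]] := sep _ _ ac.
have [Kad [cad ad1 ad2]] := sep _ _ ad.
have [Kbc [cbc bc1 bc2]] := sep _ _ bc.
have [Kbd [cbd bd1 bd2]] := sep _ _ bd.
have [Kab [cab ab1 ab2]] := sep _ _ ab.
have [Kcd [ccd cd1 cd2]] := sep _ _ cd.
have [Kxz [cxz xz1 xz2]] := sep _ _ xz.
have [Kyz [cyz yz1 yz2]] := sep _ _ yz.
have [Kxy [cxy xy1 xy2]] := sep _ _ xy.
pose V1 := Vs `&` ((Kac `&` Kad) `|` (Kbc `&` Kbd)).
pose U2 := ~` Vs `&` (Kxz `|` Kyz).
pose U2a := U2 `&` Kxy.
pose V1a := V1 `&` Kab.
pose V2a := (Vs `\` V1) `&` Kcd.
have cV1 : clopen V1 by rewrite /V1; clo.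
have cU2 : clopen U2 by rewrite /U2; clo.
have cU2a : clopen U2a by rewrite /U2a; clo.
have cV1a : clopen V1a by rewrite /V1a; clo.
have cV2a : clopen V2a by rewrite /V2a; apply: clopenI' => //; apply: clopenI' => //; exact: clopenC'.
exists (GG (dd3 Vs V1 U2 V1a V2a U2a e)); split.
- apply: GG_pants; [exact: hd3|exact: hs3].
- apply: (@Gg E Vs V1 U2 V1a V2a U2a x y a b e); rewrite /U2a /V1a /V2a /V1 /U2 /=; try tauto.
- move=> vl; apply: (@conv_main E Vs V1 U2 V1a V2a U2a x y z a b c dd e _ _ _ _ _ _ _ _ _ _ _
    _ _ _ _ _ _ _ _ _ _ _ _ _ _ _ _ vl); rewrite /U2a /V1a /V2a /V1 /U2 /=; try tauto.
Qed.

Unset Implicit Arguments.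
Theorem mainTheorem7 (E : topologicalType)
  (hE : stone_space E) (hsc : @second_countable E)
  (h7 : exists f : 'I_7 -> E, injective f)
  (gamma : set (set E)) (hg : nonperipheral gamma) :
  outermost gamma <->
  (forall G : set (set (set E)), pants_decomposition G -> G gamma ->
     valence_le2 G gamma).
Proof.
split.
- move=> [ng [U [gU [x [y [xy eU]]]]]] G [_ Gnp Gcomp Gmax _] Gg.
  have [U0 [cU0 _ _ eg]] := cutP hg.1.
  have egU : gamma = cutof U.
    by move: gU; rewrite eg => -[->|->] //; rewrite cutofC.
  rewrite egU in Gg *; exact: (fwd_main xy eU Gnp Gcomp Gmax Gg).
- move=> H; apply: contrapT => nog.
  case: hE => cE hsE tdE.
  have ZD := stone_zero_dim cE hsE tdE.
  case: h7 => f fi.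
  have [e [he hes]] := clopen_enum (f ord0) cE hsc.
  have [U0 [cU0 _ _ eg]] := cutP hg.1.
  have [B [eB [p1 [p2 [p3 [p4 [B1 B2 B3 B4 [n12 n13 n14 n23 [n24 n34]]]]]]]]] := four_of U0 fi.
  have cB : clopen B by case: eB => ->; [|exact: clopenC'].
  have egB : gamma = cutof B by case: eB => ->; rewrite ?cutofC.
  have gnB : gamma (~` B) by rewrite egB; right.
  have [q1 [q2 [q3 [C1 C2 C3 [m12 m13 m23]]]]] := three hg nog gnB.
  have [G [pG GB nv]] := conv_build ZD he hes cB B1 B2 B3 B4 C1 C2 C3
    n12 n13 n14 n23 n24 n34 m12 m13 m23.
  by apply: nv; rewrite -egB; apply: H => //; rewrite egB.
Qed.
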